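(* Let $\mathcal{H}=(V,E)$ be a linear hypergraph without loop with $n$ vertices, and suppose $E$ can be partitioned as $E=E'\sqcup E''$ such that, with $\mathcal{H}'=(V,E')$: (i) $\mathrm{ar}(\mathcal{H}')\ge\sqrt{n}$; (ii) $|e|<\sqrt{n}$ for every $e\in E''$; (iii) for every $e\in E''$ there exists $x_0\in e$ with $\mathrm{deg}_{\mathcal{H}}(x_0)\le |e|$. Then $\mathrm{q}(\mathcal{H})\le \Delta([\mathcal{H}]_2)+1$.
   Context: A hypergraph $\mathcal{H}=(V,E)$ has a finite vertex set $V$ and a finite set $E$ of nonempty subsets of $V$ (hyperedges); a loop is a hyperedge with one element; linear means distinct hyperedges share at most one vertex. $\mathrm{deg}_{\mathcal{H}}(x)$ is the number of hyperedges containing $x$. The antirank $\mathrm{ar}$ is the minimum cardinality of a hyperedge ($\infty$ if there are none). The 2-section $[\mathcal{H}]_2$ is the simple graph on $V$ where distinct vertices are adjacent iff some hyperedge contains both; $\Delta([\mathcal{H}]_2)$ is its maximum degree. The chromatic index $\mathrm{q}(\mathcal{H})$ is the least number of colors in a coloring of hyperedges where distinct intersecting hyperedges get different colors. *)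

(* Defs.v *)
From mathcomp Require Import all_boot.
Set Implicit Arguments. Unset Strict Implicit. Unset Printing Implicit Defensive.

(* A hypergraph on a finite vertex type V is given by its set of hyperedges
   E : {set {set V}} (the vertex set is the whole of V). *)
Section Hyper.
Variable V : finType.

Definition hypergraph (E : {set {set V}}) : Prop := forall e, e \in E -> e != set0.

Definition loopless (E : {set {set V}}) : Prop := forall e, e \in E -> #|e| != 1.

Definition linear (E : {set {set V}}) : Prop :=
  forall e f, e \in E -> f \in E -> e != f -> #|e :&: f| <= 1.

Definition hdeg (E : {set {set V}}) (x : V) : nat := #|[set e in E | x \in e]|.

Definition sec2_adj (E : {set {set V}}) (x y : V) : bool :=
  (x != y) && [exists e in E, (x \in e) && (y \in e)].

Definition maxdeg_sec2 (E : {set {set V}}) : nat :=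
  \max_(x : V) #|[set y | sec2_adj E x y]|.

Definition edge_colorable (E : {set {set V}}) (k : nat) : bool :=
  [exists c : {ffun {set V} -> 'I_k},
     [forall e in E, forall f in E,
        ((e != f) && (e :&: f != set0)) ==> (c e != c f)]].

Lemma edge_colorable_card (E : {set {set V}}) : exists k, edge_colorable E k.
Proof.
exists #|E|.+1; apply/existsP.
exists [ffun e => inord (index e (enum E))].
apply/forallP => e; apply/implyP => eE; apply/forallP => f; apply/implyP => fE.
apply/implyP => /andP [nef _]; rewrite !ffunE.
apply: contra nef => /eqP H; apply/eqP.
have e1 : e \in enum E by rewrite mem_enum.
have f1 : f \in enum E by rewrite mem_enum.
have /(congr1 val) := H; rewrite /= !inordK; last 2 first.
- by rewrite ltnS cardE ltnW // index_mem.
- by rewrite ltnS cardE ltnW // index_mem.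
by move=> H'; rewrite -[LHS](nth_index e e1) H' nth_index.
Qed.

Definition chromatic_index (E : {set {set V}}) : nat :=
  ex_minn (edge_colorable_card E).

End Hyper.

(* Main.v *)
Require Import Defs.
From mathcomp Require Import all_boot zify.
Set Implicit Arguments. Unset Strict Implicit. Unset Printing Implicit Defensive.

Section Gen.
Variable V : finType.
Implicit Types (E F G H K : {set {set V}}) (e f g h t : {set V}).

Definition nb H h := [set f in H | (f != h) && (f :&: h != set0)].

Definition properc C (c : {ffun {set V} -> 'I_C}) F :=
  forall e f, e \in F -> f \in F -> e != f -> e :&: f != set0 -> c e != c f.

Lemma proper_colorable C (c : {ffun {set V} -> 'I_C}) E : properc c E -> edge_colorable E C.
Proof.
move=> pc; apply/existsP; exists c.
apply/forallP => e; apply/implyP => eE; apply/forallP => f; apply/implyP => fE.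
by apply/implyP => /andP [nef ief]; apply: pc.
Qed.

Lemma extend C F e (c : {ffun {set V} -> 'I_C}) a :
  properc c (F :\ e) -> a \notin c @: nb F e ->
  properc [ffun t => if t == e then a else c t] F.
Proof.
move=> pc na t1 t2 t1F t2F ne12 i12; rewrite !ffunE.
case: (eqVneq t1 e) => [E1|N1]; case: (eqVneq t2 e) => [E2|N2].
- by rewrite E1 E2 eqxx in ne12.
- apply: contra na => /eqP ->; apply/imsetP; exists t2 => //.
  by rewrite inE t2F N2 /= -E1 setIC.
- apply: contra na => /eqP <-; apply/imsetP; exists t1 => //.
  by rewrite inE t1F N1 /= -E2.
- by apply: pc => //; rewrite !inE ?N1 ?N2.
Qed.

Lemma greedy C G : 0 < C ->
  (forall H, H \subset G -> H != set0 -> exists2 h, h \in H & #|nb H h| < C) ->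
  exists c : {ffun {set V} -> 'I_C}, properc c G.
Proof.
move=> C0; move: {2}#|G| (leqnn #|G|) => n; elim: n G => [|n IH] G.
  rewrite leqn0 cards_eq0 => /eqP -> _.
  by exists [ffun=> Ordinal C0] => e f; rewrite inE.
move=> Gn hyp; case: (eqVneq G set0) => [->|G0].
  by exists [ffun=> Ordinal C0] => e f; rewrite inE.
have [h hG hC] := hyp G (subxx _) G0.
have [c pc] : exists c : {ffun {set V} -> 'I_C}, properc c (G :\ h).
  apply: IH.
    by move: Gn; rewrite (cardsD1 h G) hG add1n ltnS.
  move=> K KG K0; apply: hyp K0; apply: subset_trans KG _; exact: subsetDl.
have [a na] : exists a : 'I_C, a \notin c @: nb G h.
  apply/existsP; rewrite -negb_forall; apply/negP => /forallP allin.
  have : #|'I_C| <= #|c @: nb G h|.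
    by apply: subset_leq_card; apply/subsetP => a _; apply: allin.
  rewrite card_ord => H1.
  have := leq_trans H1 (leq_imset_card _ _); rewrite leqNgt hC //.
by exists [ffun t => if t == h then a else c t]; apply: extend.
Qed.

Lemma card_bigcup_le (I : finType) (A : {set I}) (F : I -> {set V}) :
  #|\bigcup_(i in A) F i| <= \sum_(i in A) #|F i|.
Proof.
elim/big_rec2: _ => [|i n U _ h]; first by rewrite cards0.
apply: leq_trans (leq_card_setU _ _) _; exact: leq_add.
Qed.

Lemma card_bigcup_disj (I : finType) (A : {set I}) (F : I -> {set V}) :
  (forall i j, i \in A -> j \in A -> i != j -> [disjoint F i & F j]) ->
  \sum_(i in A) #|F i| = #|\bigcup_(i in A) F i|.
Proof.
move: {2}#|A| (leqnn #|A|) => n; elim: n A => [|n IH] A.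
  by rewrite leqn0 cards_eq0 => /eqP -> _; rewrite !big_set0 cards0.
move=> An dj; case: (set_0Vmem A) => [->|[a aA]]; first by rewrite !big_set0 cards0.
rewrite (bigD1 a aA) (bigD1 a aA) /=.
have -> : \sum_(i in A | i != a) #|F i| = \sum_(i in A :\ a) #|F i|.
  by apply: eq_bigl => i; rewrite !inE andbC.
have -> : \bigcup_(i in A | i != a) F i = \bigcup_(i in A :\ a) F i.
  by apply: eq_bigl => i; rewrite !inE andbC.
rewrite IH; last first.
- by move=> i j; rewrite !inE => /andP[_ iA] /andP[_ jA]; apply: dj.
- by move: An; rewrite (cardsD1 a A) aA add1n ltnS.
apply/esym/eqP; rewrite (leq_card_setU (F a)); apply/bigcup_disjoint => i.
rewrite !inE => /andP [ia iA]; apply: dj => //; by rewrite eq_sym.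
Qed.

End Gen.

Lemma sum_lb (T : finType) (A : {set T}) (F : T -> nat) m :
  (forall i, i \in A -> m <= F i) -> #|A| * m <= \sum_(i in A) F i.
Proof. by move=> h; rewrite -sum_nat_const; apply: leq_sum. Qed.

Lemma sum_ub (T : finType) (A : {set T}) (F : T -> nat) m :
  (forall i, i \in A -> F i <= m) -> \sum_(i in A) F i <= #|A| * m.
Proof. by move=> h; rewrite -sum_nat_const; apply: leq_sum. Qed.

Lemma sum_succ (T : finType) (A : {set T}) (F : T -> nat) m :
  \sum_(i in A) (F i).+1 * m = (\sum_(i in A) F i + #|A|) * m.
Proof.
rewrite -big_distrl /=; congr (_ * _).
rewrite (eq_bigr (fun x => F x + 1)); last by move=> *; rewrite addn1.
by rewrite big_split /= sum_nat_const muln1.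
Qed.

Section Hyp.
Variable V : finType.
Variable E : {set {set V}}.
Hypotheses (hE : hypergraph E) (lE : loopless E) (linE : linear E).

Definition N2 x := [set y | sec2_adj E x y].
Local Notation D := (maxdeg_sec2 E).

Lemma N2_D x : #|N2 x| <= D.
Proof. exact: (leq_bigmax (F := fun x => #|[set y | sec2_adj E x y]|)). Qed.

Lemma N2_n x : #|N2 x| <= #|V|.-1.
Proof.
rewrite -(cardsC1 x); apply: subset_leq_card; apply/subsetP => y.
by rewrite !inE /sec2_adj eq_sym => /andP [].
Qed.

Lemma edge_ge2 e : e \in E -> 1 < #|e|.
Proof.
move=> eE; have := hE eE; have := lE eE; rewrite -card_gt0.
by case: #|e| => [|[|n]].
Qed.

Lemma lin2 e f x y : e \in E -> f \in E -> x \in e -> x \in f ->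
  y \in e -> y \in f -> x != y -> e = f.
Proof.
move=> eE fE xe xf ye yf xy; apply/eqP; apply/negPn/negP => nef.
have := linE eE fE nef.
have : #|[set x; y]| <= #|e :&: f|.
  by apply: subset_leq_card; apply/subsetP => z; rewrite !inE => /orP [] /eqP ->; rewrite ?xe ?xf ?ye ?yf.
rewrite cards2 xy => h1 h2; have := leq_trans h1 h2; by [].
Qed.

Lemma sum_le_N2 x (A : {set {set V}}) : A \subset [set f in E | x \in f] ->
  \sum_(f in A) #|f|.-1 <= #|N2 x|.
Proof.
move=> AE.
have AE' f : f \in A -> (f \in E) && (x \in f) by move=> fA; have := subsetP AE f fA; rewrite inE.
rewrite (eq_bigr (fun f => #|f :\ x|)); last first.
  by move=> f /AE' /andP [_ xf]; rewrite (cardsD1 x f) xf.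
rewrite card_bigcup_disj.
  apply: subset_leq_card; apply/subsetP => y /bigcupP [f fA]; rewrite !inE => /andP [yx yf].
  have /andP [fE xf] := AE' f fA.
  rewrite /sec2_adj eq_sym yx /=; apply/existsP; exists f; by rewrite fE xf yf.
move=> f g fA gA fg; rewrite -setI_eq0; apply/eqP/setP => y; rewrite !inE.
apply/negbTE/negP => /andP [/andP [yx yf] /andP [_ yg]].
have /andP [fE xf] := AE' f fA; have /andP [gE xg] := AE' g gA.
have xy : x != y by rewrite eq_sym.
by move: fg; rewrite (lin2 fE gE xf xg yf yg xy) eqxx.
Qed.

End Hyp.

Lemma arith1 (s d : nat) : 1 < s -> (d.+1 + s) * s.-1 <= s * d -> s ^ 2 <= d.+1.
Proof. move=> h; case: s h => [|[|k]] // _ /=. nia. Qed.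
Lemma arith2 (s a : nat) : 1 < s -> a.+1 * s.-1 <= (s ^ 2).-1 -> a <= s.
Proof. move=> h; case: s h => [|[|k]] // _ /=. nia. Qed.

Section Tight.
Variable V : finType.
Variables E E' E'' : {set {set V}}.
Hypotheses (hE : hypergraph E) (lE : loopless E) (linE : linear E).
Hypothesis hU : E = E' :|: E''.
Hypothesis hi : forall e, e \in E' -> #|V| <= #|e| ^ 2.
Hypothesis hiii : forall e, e \in E'' -> exists2 x0, x0 \in e & hdeg E x0 <= #|e|.
Local Notation D := (maxdeg_sec2 E).

Definition good s x := [/\ forall f, f \in E -> x \in f -> #|f| = s,
  forall y, y != x -> exists2 f, f \in E & (x \in f) && (y \in f)
  & #|[set f in E | x \in f]| = s.+1].

Lemma tight_min (H : {set {set V}}) (e : {set V}) : H \subset E -> (forall h, h \in H -> D < #|nb H h|) ->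
  e \in H -> (forall h, h \in H -> #|e| <= #|h|) ->
  [/\ #|V| = #|e| ^ 2, D = #|V|.-1, forall x, x \in e -> good #|e| x
   & forall x f, x \in e -> f \in E -> x \in f -> f \in H].
Proof.
move=> HE big eH emin; set s := #|e|.
have eE : e \in E := subsetP HE e eH.
have s2 : 1 < s := edge_ge2 hE lE eE.
pose A x := [set f in H | (x \in f) && (f != e)].
pose B x := e |: A x.
have BH x : B x \subset H.
  by apply/subsetP => f; rewrite !inE => /orP [/eqP ->|/andP [] //].
have Bsub x : x \in e -> B x \subset [set f in E | x \in f].
  move=> xe; apply/subsetP => f; rewrite !inE => /orP [/eqP ->|/andP [fH /andP [xf _]]].
    by rewrite eE xe.
  by rewrite (subsetP HE f fH) xf.
have Bcard x : #|B x| = (#|A x|).+1.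
  by rewrite cardsU1 !inE eqxx !andbF.
have keyA x : x \in e -> (#|A x|).+1 * s.-1 <= #|N2 E x|.
  move=> xe; rewrite -Bcard; apply: leq_trans (sum_le_N2 linE (Bsub x xe)).
  apply: sum_lb => f fB; rewrite -!subn1 leq_sub2r //; apply: emin.
  exact: (subsetP (BH x)).
have nbsub : nb H e \subset \bigcup_(x in e) A x.
  apply/subsetP => t; rewrite inE => /andP [tH /andP [te /set0Pn [x]]].
  rewrite inE => /andP [xt xe]; apply/bigcupP; exists x => //.
  by rewrite inE tH xt te.
have T := leq_trans (subset_leq_card nbsub) (card_bigcup_le _ _).
have Dlt := big e eH.
have : e \in E' :|: E'' by rewrite -hU.
case/setUP => [eE'|eE'']; last first.
  exfalso; have [x0 x0e dx0] := hiii eE''.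
  have A0 : #|A x0| <= s.-1.
    have : A x0 \subset [set f in E | x0 \in f] :\ e.
      apply/subsetP => f; rewrite !inE => /andP [fH /andP [xf fe]].
      by rewrite fe (subsetP HE f fH) xf.
    move/subset_leq_card => h; apply: (leq_trans h); move: dx0.
    rewrite /hdeg (cardsD1 e [set f in E | x0 \in f]) !inE eE x0e /= -/s add1n => h2.
    rewrite -ltnS prednK; [exact: h2 | exact: ltnW s2].
  rewrite (big_setD1 x0 x0e) /= in T.
  set S := \sum_(i in e :\ x0) #|A i| in T.
  have hs : \sum_(x in e :\ x0) (#|A x|).+1 * s.-1 <= #|e :\ x0| * D.
    apply: sum_ub => x; rewrite inE => /andP [_ xe].
    exact: leq_trans (keyA x xe) (N2_D _ _).
    have cs : #|e :\ x0| = s.-1 by rewrite /s (cardsD1 x0 e) x0e.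
  rewrite sum_succ cs -/S mulnC leq_pmul2l in hs; last by rewrite -subn1 subn_gt0.
  have h1 : #|nb H e| <= D.
    apply: (leq_trans T); apply: leq_trans (leq_add A0 (leqnn S)) _; by rewrite addnC.
  by rewrite ltnNge h1 in Dlt.
have hn := hi eE'.
have hs : \sum_(x in e) (#|A x|).+1 * s.-1 <= #|e| * D.
  apply: sum_ub => x xe; exact: leq_trans (keyA x xe) (N2_D _ _).
rewrite sum_succ -/s in hs.
have Dn : D <= #|V|.-1 by apply/bigmax_leqP => x _; exact: N2_n.
set T' := \sum_(i in e) #|A i| in T hs.
have Te : D < T' := leq_trans Dlt T.
have f1 : (D.+1 + s) * s.-1 <= s * D.
  apply: leq_trans hs; apply: leq_mul => //; exact: leq_add.
have f2 : s ^ 2 <= D.+1 := arith1 s2 f1.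
have V0 : 0 < #|V| by apply: leq_trans (ltnW s2) (max_card _).
have nV : #|V| = s ^ 2 by move: hn; rewrite -/s; lia.
have Dv : D = #|V|.-1 by lia.
have N2s x : #|N2 E x| <= (s ^ 2).-1 by rewrite -nV; exact: N2_n.
have Ale x : x \in e -> #|A x| <= s.
  move=> xe; apply: arith2 s2 _; exact: leq_trans (keyA x xe) (N2s x).
have Aeq x : x \in e -> #|A x| = s.
  move=> xe; apply/eqP; rewrite eqn_leq Ale //=; rewrite leqNgt; apply/negP => lt.
  have : T' <= s.-1 + s.-1 * s.
    rewrite /T' (big_setD1 x xe) /=; apply: leq_add; first by rewrite -ltnS prednK // ltnW.
    have -> : s.-1 = #|e :\ x| by rewrite /s (cardsD1 x e) xe.
    apply: sum_ub => y; rewrite inE => /andP [_ ye]; exact: Ale.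
  move: Te f2; rewrite Dv nV; move: (T'); case: (s) s2 => [|[|k]] // _ /=; nia.
have sumB x : x \in e -> \sum_(f in B x) #|f|.-1 <= (s ^ 2).-1.
  move=> xe; exact: leq_trans (sum_le_N2 linE (Bsub x xe)) (N2s x).
have sumBlb x : x \in e -> s.+1 * s.-1 <= \sum_(f in B x) #|f|.-1.
  move=> xe; have -> : s.+1 = #|B x| by rewrite Bcard Aeq.
  apply: sum_lb => f fB.
  rewrite -!subn1 leq_sub2r //; apply: emin; exact: (subsetP (BH x)).
have inB x f : x \in e -> f \in E -> x \in f -> f \in B x.
  move=> xe fE xf; apply/negPn/negP => nfB.
  have : \sum_(g in f |: B x) #|g|.-1 <= #|N2 E x|.
    apply: (sum_le_N2 linE); apply/subsetP => g; rewrite in_setU1 => /orP [/eqP ->|gB].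
      by rewrite inE fE xf.
    exact: (subsetP (Bsub x xe)).
  rewrite big_setU1 //= => h1.
  have h2 := leq_trans h1 (N2s x).
  have h3 := sumBlb x xe.
  have h4 : 1 <= #|f|.-1 by rewrite -subn1 subn_gt0 (edge_ge2 hE lE fE).
  move: h2 h3 h4; move: (\sum_(g in B x) #|g|.-1) (#|f|.-1).
  case: (s) s2 => [|[|k]] // _ /= a b; nia.
have sizeB x f : x \in e -> f \in B x -> #|f| = s.
  move=> xe fB; apply/eqP; rewrite eqn_leq emin ?andbT; last exact: (subsetP (BH x)).
  have := sumB x xe; rewrite (big_setD1 f fB) /=.
  have : (#|B x :\ f|) * s.-1 <= \sum_(i in B x :\ f) #|i|.-1.
    apply: sum_lb => g; rewrite inE => /andP [_ gB].
    rewrite -!subn1 leq_sub2r //; apply: emin; exact: (subsetP (BH x)).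
  have cBf : #|B x :\ f| = s.
    by have := cardsD1 f (B x); rewrite fB Bcard Aeq // add1n => -[].
  rewrite cBf.
  move: (\sum_(i in B x :\ f) #|i|.-1) => a h1 h2.
  have h3 : #|f|.-1 <= s.-1.
    move: h1 h2; case: (s) s2 => [|[|k]] // _ /=; move: (#|f|.-1); nia.
  move: h3 (edge_ge2 hE lE (subsetP HE f (subsetP (BH x) f fB))).
  move: (#|f|) => m; lia.
split => //; last first.
  by move=> x f xe fE xf; apply: (subsetP (BH x)); apply: inB.
move=> x xe; split.
- move=> f fE xf; exact: sizeB x f xe (inB x f xe fE xf).
- move=> y yx.
  have : N2 E x = [set~ x].
    apply/eqP; rewrite eqEcard cardsC1 nV; apply/andP; split.
      apply/subsetP => z; rewrite !inE /sec2_adj eq_sym => /andP [] //.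
    apply: leq_trans _ (sum_le_N2 linE (Bsub x xe)); apply: leq_trans _ (sumBlb x xe).
    by case: (s) s2 => [|[|k]] // _ /=; nia.
  move/setP => /(_ y); rewrite !inE yx /sec2_adj => /andP [_ /existsP [f /andP [fE /andP [xf yf]]]].
  by exists f => //; rewrite xf yf.
- have -> : [set f in E | x \in f] = B x.
    apply/setP => f; apply/idP/idP.
      by rewrite inE => /andP [fE xf]; apply: inB.
    by move/(subsetP (Bsub x xe)).
  by rewrite Bcard Aeq.
Qed.
End Tight.

Lemma free_color C (X : {set 'I_C}) : #|X| < C -> exists a : 'I_C, a \notin X.
Proof.
move=> hC; apply/existsP; rewrite -negb_forall; apply/negP => /forallP allin.
have : #|'I_C| <= #|X| by apply: subset_leq_card; apply/subsetP => a _; apply: allin.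
by rewrite card_ord leqNgt hC.
Qed.

Lemma ar1 a b c n : a <= b -> c = b.+1 -> c <= n -> a < n.
Proof. lia. Qed.
Lemma ar2 a s : s <= a -> 1 + (1 + a) <= s.+1 -> False.
Proof. lia. Qed.
Lemma ar3 s : 1 < s -> 1 < s * s.
Proof. nia. Qed.

Section Merge.
Variable V : finType.
Variable E : {set {set V}}.
Hypotheses (hE : hypergraph E) (lE : loopless E) (linE : linear E).
Local Notation D := (maxdeg_sec2 E).
Variable s : nat.
Hypotheses (s2 : 1 < s) (nV : #|V| = s ^ 2) (Dv : D = #|V|.-1).
Hypothesis allg : forall x, good E s x.

Lemma sizeE t : t \in E -> #|t| = s.
Proof.
move=> tE; have /set0Pn [v vt] := hE tE; by have [h _ _] := allg v; apply: h.
Qed.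

Lemma degE z : #|[set f in E | z \in f]| = s.+1.
Proof. by have [_ _ h] := allg z. Qed.

Lemma nbE h : h \in E -> #|nb E h| <= s * s.
Proof.
move=> hE'.
have : nb E h \subset \bigcup_(z in h) ([set f in E | z \in f] :\ h).
  apply/subsetP => t; rewrite inE => /andP [tE /andP [th /set0Pn [z]]].
  rewrite inE => /andP [zt zh]; apply/bigcupP; exists z => //.
  by rewrite !inE th tE zt.
move/subset_leq_card/leq_trans; apply; apply: leq_trans (card_bigcup_le _ _) _.
rewrite -(sizeE hE'); apply: sum_ub => z zh.
have := cardsD1 h [set f in E | z \in f]; rewrite degE !inE hE' zh add1n.
by case=> <-; rewrite (sizeE hE').
Qed.

Lemma meet1 t r : t \in E -> r \in E -> t != r -> #|t :&: r| <= 1.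
Proof. by move=> tE rE tr; apply: linE. Qed.

Lemma F3 p r : r \in E -> p \notin r ->
  s <= #|[set t in E | (p \in t) && (t :&: r != set0)]|.
Proof.
move=> rE pr; set S := [set t in E | _].
have : r \subset \bigcup_(t in S) (t :&: r).
  apply/subsetP => z zr.
  have zp : z != p by apply: contraNneq pr => <-.
  have [_ h _] := allg p; have [t tE /andP [pt zt]] := h z zp.
  apply/bigcupP; exists t; last by rewrite inE zt zr.
  rewrite inE tE pt /=; apply/set0Pn; exists z; by rewrite inE zt zr.
move/subset_leq_card; rewrite (sizeE rE) => h1; apply: leq_trans h1 _.
apply: leq_trans (card_bigcup_le _ _) _; rewrite -[X in _ <= X]muln1.
apply: sum_ub => t; rewrite inE => /andP [tE /andP [pt _]]; apply: meet1 => //.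
by apply: contraNneq pr => <-.
Qed.


Lemma DS : D.+1 = s * s.
Proof. by rewrite Dv nV; case: (s) s2 => [|[|k]] //= _; rewrite expnS expn1. Qed.

Lemma merge_col r : r \in E -> exists c : {ffun {set V} -> 'I_D.+1}, properc c E.
Proof.
move=> rE.
have [x [y [xr yr xy]]] : exists x y, [/\ x \in r, y \in r & x != y].
  by apply/card_gt1P; rewrite (sizeE rE).
have [f fX] : exists f, f \in [set t in E | x \in t] :\ r.
  apply/set0Pn; rewrite -card_gt0.
  have := cardsD1 r [set t in E | x \in t]; rewrite degE !inE rE xr add1n.
  by case=> <-; apply: ltnW.
move: fX; rewrite !inE => /andP [fr /andP [fE xf]].
have yf : y \notin f.
  by apply/negP => yf; move: fr; rewrite (lin2 linE fE rE xf xr yf yr xy) eqxx.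
set Bg := [set t in E | y \in t] :\ r.
have cB : #|Bg| = s.
  have := cardsD1 r [set t in E | y \in t]; rewrite degE !inE rE yr add1n.
  by case=> ->.
have [g gB fg0] : exists2 g, g \in Bg & f :&: g == set0.
  case: (boolP [exists g in Bg, f :&: g == set0]) => [/exists_inP [g gB hg]|/exists_inP nog].
    by exists g.
  exfalso.
  have : Bg \subset \bigcup_(z in f :\ x) [set t in Bg | z \in t].
    apply/subsetP => t tB.
    have /set0Pn [z] : f :&: t != set0 by apply/negP => h; apply: nog; exists t.
    rewrite inE => /andP [zf zt].
    move: (tB); rewrite !inE => /andP [tr /andP [tE yt]].
    have zx : z != x.
      apply/negP => /eqP zx; rewrite zx in zt.
      by move: tr; rewrite (lin2 linE tE rE zt xr yt yr xy) eqxx.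
    apply/bigcupP; exists z; first by rewrite !inE zx zf.
    by rewrite inE tB zt.
  move/subset_leq_card; rewrite cB => h1.
  have h2 : \sum_(z in f :\ x) #|[set t in Bg | z \in t]| <= #|f :\ x| * 1.
    apply: sum_ub => z; rewrite inE => /andP [zx zf].
    apply/card_le1_eqP => t1 t2; rewrite !inE.
    move=> /andP [/andP [_ /andP [t1E yt1]] zt1] /andP [/andP [_ /andP [t2E yt2]] zt2].
    have yz : y != z by apply: contraNneq yf => ->.
    exact: (lin2 linE t2E t1E yt2 yt1 zt2 zt1 yz).
  have h3 := leq_trans h1 (leq_trans (card_bigcup_le _ _) h2).
  move: h3; rewrite muln1; have := cardsD1 x f; rewrite xf (sizeE fE) add1n => ->; by rewrite ltnn.
move: gB; rewrite !inE => /andP [gr /andP [gE yg]].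
have gf : g != f by apply: contraNneq yf => <-.
set u := f :|: g.
have cu : #|u| = s + s by rewrite /u cardsU (eqP fg0) cards0 subn0 (sizeE fE) (sizeE gE).
have uE : u \notin E.
  apply/negP => uE; have := sizeE uE; rewrite cu => /eqP.
  by rewrite -[X in _ == X]add0n eqn_add2r; case: (s) s2.
set G := (E :\: [set r; f; g]) :|: [set u].
have uG : u \in G by rewrite !inE eqxx orbT.
have EG t : t \in E -> t != r -> t != f -> t != g -> t \in G.
  by move=> tE tr tf tg; rewrite !inE tE (negbTE tr) (negbTE tf) (negbTE tg).
have GE t : t \in G -> t != u -> [/\ t \in E, t != r, t != f & t != g].
  rewrite !inE => /orP [/andP [] |/eqP -> ]; last by rewrite eqxx.
  by rewrite !negb_or => /andP [/andP [? ?] ?] ? _.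
have deg : forall K : {set {set V}}, K \subset G -> K != set0 -> exists2 h, h \in K & #|nb K h| < D.+1.
  move=> K KG K0; rewrite DS.
  case: (boolP [exists h in K, (h \in E) && (h :&: r != set0)]) => [/exists_inP [h hK /andP [hE' hr]] | /exists_inP noA].
    exists h => //.
    have hu : h != u by apply: contraNneq uE => <-.
    have [_ hnr hnf hng] := GE h (subsetP KG h hK) hu.
    pose phi t := if t == u then (if f :&: h != set0 then f else g) else t.
    have phiP : {in nb K h, forall t, phi t \in nb E h :\ r}.
      move=> t; rewrite inE => /andP [tK /andP [th tmeet]].
      rewrite /phi; case: eqVneq => [tu | tu].
        case: (boolP (f :&: h != set0)) => fh.
          by rewrite !inE fr fE eq_sym hnf fh.
        have gh : g :&: h != set0.
          move: tmeet; rewrite tu /u setIUl (eqP (negbNE fh)) set0U //.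
        by rewrite !inE gr gE eq_sym hng gh.
      have [tE tr _ _] := GE t (subsetP KG t tK) tu.
      by rewrite !inE tr tE th tmeet.
    have phiI : {in nb K h &, injective phi}.
      move=> t1 t2; rewrite !inE => /andP [t1K _] /andP [t2K _]; rewrite /phi.
      case: (eqVneq t1 u) => [t1u|t1u]; case: (eqVneq t2 u) => [t2u|t2u] //.
      - by rewrite t1u t2u.
      - move=> e; have [_ _ t2f t2g] := GE t2 (subsetP KG t2 t2K) t2u.
        by move: t2f t2g; rewrite -e; case: ifP => _; rewrite eqxx ?andbF.
      - move=> e; have [_ _ t1f t1g] := GE t1 (subsetP KG t1 t1K) t1u.
        by move: t1f t1g; rewrite e; case: ifP => _; rewrite eqxx ?andbF.
    rewrite -(card_in_imset phiI).
    have : phi @: nb K h \subset nb E h :\ r.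
      by apply/subsetP => _ /imsetP [t tN ->]; exact: phiP.
    move/subset_leq_card => h1.
    have rN : r \in nb E h by rewrite !inE rE eq_sym hnr setIC hr.
    have := cardsD1 r (nb E h); rewrite rN add1n => h2.
    have h3 := nbE hE'.
    exact: ar1 h1 h2 h3.
  have noA' : forall h, h \in K -> h \in E -> h :&: r == set0.
    move=> h hK hE'; apply/negPn/negP => hr; apply: noA; exists h => //.
    by rewrite hE' hr.
  case: (boolP [exists h in K, h \in E]) => [/exists_inP [h hK hE'] | /exists_inP noE].
    exists h => //.
    have : nb K h \subset [set u].
      apply/subsetP => t; rewrite inE => /andP [tK /andP [th /set0Pn [p]]].
      rewrite inE => /andP [pt ph].
      rewrite inE; apply/negPn/negP => tu.
      have [tE _ _ _] := GE t (subsetP KG t tK) tu.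
      have tr := noA' t tK tE; have hr := noA' h hK hE'.
      have pr : p \notin r.
        by apply/negP => pr; move/eqP/setP: hr => /(_ p); rewrite !inE ph pr.
      have := F3 rE pr; set S := [set t0 in E | _] => cS.
      have hS : h \notin S by rewrite inE hE' ph hr.
      have tS : t \notin S by rewrite inE tE pt tr.
      have : h |: (t |: S) \subset [set f0 in E | p \in f0].
        apply/subsetP => q; rewrite !in_setU1 => /or3P [/eqP ->|/eqP ->|].
        - by rewrite inE hE' ph.
        - by rewrite inE tE pt.
        - by rewrite !inE => /andP [-> /andP [-> _]].
      move/subset_leq_card; rewrite degE !cardsU1 in_setU1 negb_or eq_sym th hS tS /=.
      exact: ar2 cS.
    move/subset_leq_card; rewrite cards1 => h1.
    by apply: leq_ltn_trans h1 _; apply: ar3.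
  have /set0Pn [h hK] := K0; exists h => //.
  have isu t : t \in K -> t == u.
    move=> tK; apply/negPn/negP => tu; have [tE _ _ _] := GE t (subsetP KG t tK) tu.
    by apply: noE; exists t.
  have -> : nb K h = set0.
    apply/setP => t; rewrite !inE; apply/negbTE/negP => /andP [tK /andP [th _]].
    by move: th; rewrite (eqP (isu t tK)) (eqP (isu h hK)) eqxx.
  by rewrite cards0 muln_gt0 (ltnW s2).
have [cs pcs] := greedy (ltn0Sn D) deg.
pose c' := [ffun t => if (t == f) || (t == g) then cs u else cs t].
have pc' : properc c' (E :\ r).
  move=> t1 t2; rewrite !inE => /andP [t1r t1E] /andP [t2r t2E] t12 m12; rewrite !ffunE.
  case: (boolP ((t1 == f) || (t1 == g))) => h1; case: (boolP ((t2 == f) || (t2 == g))) => h2.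
  - exfalso; move: h1 h2 m12 t12 => /orP [] /eqP -> /orP [] /eqP ->; rewrite ?eqxx //.
      by rewrite (eqP fg0) eqxx.
    by rewrite setIC (eqP fg0) eqxx.
  - move: h2; rewrite negb_or => /andP [t2f t2g].
    have t2G := EG t2 t2E t2r t2f t2g.
    apply: pcs => //; first by apply: contraNneq uE => ->.
    apply: contra m12 => /eqP h0; apply/eqP/setP => z; rewrite !inE.
    apply/negbTE/negP => /andP [z1 z2]; move/setP: h0 => /(_ z); rewrite !inE z2 andbT.
    by move: h1 => /orP [] /eqP e; rewrite -e z1 ?orbT.
  - move: h1; rewrite negb_or => /andP [t1f t1g].
    have t1G := EG t1 t1E t1r t1f t1g.
    apply: pcs => //; first by apply: contraNneq uE => <-.
    apply: contra m12 => /eqP h0; apply/eqP/setP => z; rewrite !inE.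
    apply/negbTE/negP => /andP [z1 z2]; move/setP: h0 => /(_ z); rewrite !inE z1 /=.
    by move: h2 => /orP [] /eqP e; rewrite -e z2 ?orbT.
  - move: h1 h2; rewrite !negb_or => /andP [t1f t1g] /andP [t2f t2g].
    by apply: pcs => //; apply: EG.
have [a na] : exists a : 'I_D.+1, a \notin c' @: nb E r.
  apply: free_color.
  have fN : f \in nb E r.
    rewrite !inE fE fr /=; apply/set0Pn; exists x; by rewrite inE xf xr.
  have gN : g \in nb E r.
    rewrite !inE gE gr /=; apply/set0Pn; exists y; by rewrite inE yg yr.
  have : c' @: nb E r \subset c' @: (nb E r :\ g).
    apply/subsetP => _ /imsetP [t tN ->]; case: (eqVneq t g) => [-> | tg].
      apply/imsetP; exists f; first by rewrite in_setD1 eq_sym gf fN.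
      by rewrite !ffunE !eqxx orbT.
    by apply: imset_f; rewrite in_setD1 tg tN.
  move/subset_leq_card/leq_trans/(_ (leq_imset_card _ _)) => h1.
  have := cardsD1 g (nb E r); rewrite gN add1n => h2.
  have h3 := nbE rE.
  apply: ar1 h1 h2 _; by rewrite DS.
by exists [ffun t => if t == r then a else c' t]; exact: extend pc' na.
Qed.

End Merge.

Theorem theorem5p3 (V : finType) (E E' E'' : {set {set V}}) :
  hypergraph E -> loopless E -> linear E ->
  E = E' :|: E'' -> [disjoint E' & E''] ->
  (* (i) ar(H') >= sqrt n, i.e. every e in E' has |e| >= sqrt #|V| *)
  (forall e, e \in E' -> #|V| <= #|e| ^ 2) ->
  (* (ii) |e| < sqrt n for e in E'' *)
  (forall e, e \in E'' -> #|e| ^ 2 < #|V|) ->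
  (* (iii) *)
  (forall e, e \in E'' -> exists2 x0, x0 \in e & hdeg E x0 <= #|e|) ->
  chromatic_index E <= maxdeg_sec2 E + 1.
Proof.
move=> hE lE linE hU _ hi _ hiii.
have col : edge_colorable E (maxdeg_sec2 E).+1.
  case: (boolP [forall H : {set {set V}}, (H \subset E) ==> (H != set0) ==>
      [exists h in H, #|nb H h| < (maxdeg_sec2 E).+1]]) => [/forallP deg | ndeg].
    have [c pc] := greedy (ltn0Sn (maxdeg_sec2 E)) (G := E) (fun H HE H0 =>
      (exists_inP (implyP (implyP (deg H) HE) H0))).
    exact: proper_colorable pc.
  move: ndeg; rewrite negb_forall => /existsP [H]; rewrite negb_imply => /andP [HE].
  rewrite negb_imply => /andP [H0 /exists_inPn nb0].
  have big : forall h, h \in H -> maxdeg_sec2 E < #|nb H h|.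
    by move=> h hH; have := nb0 h hH; rewrite -leqNgt.
  have /set0Pn [h0 h0H] := H0.
  case: (arg_minnP (fun h : {set V} => #|h|) h0H) => e eH emin.
  have [nV Dv goodE inH] := tight_min hE lE linE hU hi hiii HE big eH emin.
  have eE : e \in E := subsetP HE e eH.
  have s2 := edge_ge2 hE lE eE.
  have allg : forall v, good E #|e| v.
    move=> v; have /set0Pn [x xe] := hE _ eE.
    case: (eqVneq v x) => [-> | vx]; first exact: goodE.
    have [_ h _] := goodE x xe; have [f fE /andP [xf vf]] := h v vx.
    have fH := inH x f xe fE xf.
    have [sf _ _] := goodE x xe; have sfe := sf f fE xf.
    have fmin : forall h, h \in H -> #|f| <= #|h| by move=> h1 h1H; rewrite sfe; exact: emin.
    have [_ _ goodF _] := tight_min hE lE linE hU hi hiii HE big fH fmin.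
    by rewrite -sfe; exact: goodF.
  have [c pc] := merge_col hE linE s2 nV Dv allg eE.
  exact: proper_colorable pc.
rewrite addn1 /chromatic_index; case: ex_minnP => m _; apply; exact: col.
Qed.
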